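(* Let $\rho=(r\colon L\rightharpoonup R,U)$ be a universally quantified rule such that for every $u\in U$, writing $(\mathrm{id}_L,r)\oplus u=(\pi_u\colon L\to\overline L_u,\gamma_u\colon\overline L_u\rightharpoonup\overline R_u)$ with outer pushout morphism $\alpha_u\colon R\rightharpoonup\overline R_u$, every edge of $\overline R_u$ without preimage under $\alpha_u$ is incident to some node of $\overline R_u$ without preimage under $\alpha_u$. Let $G$ be a graph. Then for every instantiation $(\pi,\gamma\colon\overline L\rightharpoonup\overline R)$ of $\rho$ of length greater than $|V_G|$, every subgraph morphism $\nu\colon\overline R\rightharpoonup R'$, every total injective $m\colon R'\to G$ and every pushout complement $H$ of $\nu\circ\gamma$ and $m$ (with total injective morphism $\overline L\to H$), there exist an instantiation $(\pi^\ast,\gamma^\ast\colon\overline L^\ast\rightharpoonup\overline R^\ast)$ of $\rho$ of length at most $|V_G|$, a subgraph morphism $\nu^\ast\colon\overline R^\ast\rightharpoonup R'$ and a pushout complement $H^\ast$ of $\nu^\ast\circ\gamma^\ast$ and $m$ with $H^\ast\sqsubseteq H$. In other words, $|V_G|$ is a valid bound on the length of instantiations needed in a backward step from $G$.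
   Context: Fix a finite label set $\Lambda$ with arity function $\mathrm{ar}\colon\Lambda\to\mathbb N$. A (hyper)graph $G=(V_G,E_G,c_G,l_G)$ consists of finite sets $V_G$ (nodes) and $E_G$ (edges), a connection function $c_G\colon E_G\to V_G^*$ and a labelling $l_G\colon E_G\to\Lambda$ with $|c_G(e)|=\mathrm{ar}(l_G(e))$; an edge $e$ is incident to a node $v$ if $v$ occurs in $c_G(e)$. A morphism $\phi\colon G\rightharpoonup G'$ is a pair of partial functions $\phi_V,\phi_E$ such that whenever $\phi_E(e)$ is defined, $\phi_V$ is defined on all nodes incident to $e$, $l_{G'}(\phi_E(e))=l_G(e)$ and $\phi_V(c_G(e))=c_{G'}(\phi_E(e))$. ''Total'' means defined everywhere. Pushouts are taken in the category of graphs and partial morphisms (always exist, unique up to isomorphism; concretely: quotient of $G_1\sqcup G_2$ by the smallest equivalence identifying $\phi(x)$ and $\psi(x)$ for $x\in G_0$, dropping classes containing the image of an $x\in G_0$ on which $\phi$ or $\psi$ is undefined and edge classes incident to dropped node classes). Given $a\colon A\rightharpoonup B$ and $b\colon B\rightharpoonup D$, a pushout complement of $a$ and $b$ is a graph $C$ with morphisms $c\colon A\rightharpoonup C$, $d\colon C\rightharpoonup D$ such that $D$ with $b,d$ is a pushout of $a,c$. A subgraph morphism is an injective and surjective morphism; $G_1\sqsubseteq G_2$ if there is a subgraph morphism $G_2\rightharpoonup G_1$. A universally quantified rule is $\rho=(r,U)$ with $r\colon L\rightharpoonup R$ and $U$ a finite set of pairs $u=(p_u,q_u)$, $p_u\colon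 L\to L_u$ total injective, $q_u\colon L_u\rightharpoonup R_u$, such that for every $x\in L$, $q_u(p_u(x))$ is defined and has exactly one preimage under $q_u$; $Q(u)$ is the set of $v\in V_L$ such that some edge incident to $p_u(v)$ has no preimage under $p_u$, required nonempty. Instantiations $(\pi\colon L\to\overline L$ total injective, $\gamma\colon\overline L\rightharpoonup\overline R)$ are defined recursively: $(\mathrm{id}_L,r)$ is one (length 0); if $(\pi,\gamma)$ is one of length $n$ and $u\in U$, let $\overline L_u$ with $p_u'\colon\overline L\to\overline L_u$, $\pi'\colon L_u\to\overline L_u$ be the pushout of $\pi,p_u$, let $\overline R_u$ with $\alpha\colon\overline R\rightharpoonup\overline R_u$, $\beta\colon R_u\rightharpoonup\overline R_u$ be the pushout of $\gamma\circ\pi$ and $q_u\circ p_u$ (this $\alpha$ is the ''outer pushout morphism''), and $\eta\colon\overline L_u\rightharpoonup\overline R_u$ the unique morphism with $\eta\circ p_u'=\alpha\circ\gamma$, $\eta\circ\pi'=\beta\circ q_u$; then $(\pi,\gamma)\oplus u:=(p_u'\circ\pi,\eta)$ is an instantiation of length $n+1$. *)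

(* Defs.v *)
From HB Require Import structures.
From mathcomp Require Import all_boot.
From Stdlib Require List.

Set Implicit Arguments.
Unset Strict Implicit.
Unset Printing Implicit Defensive.

Section Graphs.

Variable Lab : finType.
Variable ar : Lab -> nat.

Record graph := Graph {
  gV : finType;
  gE : finType;
  conn : gE -> seq gV;
  lab : gE -> Lab;
  conn_ar : forall e, size (conn e) = ar (lab e) }.

Definition is_morph (G H : graph) (fV : gV G -> option (gV H))
    (fE : gE G -> option (gE H)) : Prop :=
  forall e e', fE e = Some e' ->
    lab e' = lab e /\ map fV (conn e) = map Some (conn e').

Record morph (G H : graph) := Morph {
  mV : gV G -> option (gV H);
  mE : gE G -> option (gE H);
  mP : is_morph mV mE }.

Lemma idm_morphP (G : graph) : is_morph (G := G) (H := G) Some Some.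
Proof. by move=> e e' [<-]. Qed.

Definition idm (G : graph) : morph G G := Morph (@idm_morphP G).

Lemma comp_morphP (G H K : graph) (g : morph H K) (f : morph G H) :
  is_morph (fun v => obind (mV g) (mV f v)) (fun e => obind (mE g) (mE f e)).
Proof.
move=> e e''; case Hf: (mE f e) => [e'|] //= Hg.
have [l1 c1] := mP Hf; have [l2 c2] := mP Hg.
split; first by rewrite l2 l1.
by rewrite (map_comp (obind (mV g)) (mV f)) c1 -map_comp.
Qed.

Definition mcomp (G H K : graph) (g : morph H K) (f : morph G H) : morph G K :=
  Morph (@comp_morphP G H K g f).

Definition meq (G H : graph) (f g : morph G H) : Prop :=
  (forall v, mV f v = mV g v) /\ (forall e, mE f e = mE g e).

Definition totalm (G H : graph) (f : morph G H) : Prop :=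
  (forall v, mV f v <> None) /\ (forall e, mE f e <> None).

Definition pinj (A B : Type) (f : A -> option B) : Prop :=
  forall x y z, f x = Some z -> f y = Some z -> x = y.

Definition psurj (A B : Type) (f : A -> option B) : Prop :=
  forall z, exists x, f x = Some z.

Definition injm (G H : graph) (f : morph G H) : Prop :=
  pinj (mV f) /\ pinj (mE f).

Definition surjm (G H : graph) (f : morph G H) : Prop :=
  psurj (mV f) /\ psurj (mE f).

Definition subgraph_morph (G H : graph) (f : morph G H) : Prop :=
  injm f /\ surjm f.

Definition subgraph (G1 G2 : graph) : Prop :=
  exists f : morph G2 G1, subgraph_morph f.

Definition is_pushout (A B C D : graph) (a : morph A B) (c : morph A C)
    (b : morph B D) (d : morph C D) : Prop :=
  meq (mcomp b a) (mcomp d c) /\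
  forall (D' : graph) (b' : morph B D') (d' : morph C D'),
    meq (mcomp b' a) (mcomp d' c) ->
    exists u : morph D D',
      [/\ meq (mcomp u b) b', meq (mcomp u d) d' &
          forall u' : morph D D', meq (mcomp u' b) b' -> meq (mcomp u' d) d' ->
            meq u' u].

Record branch (L : graph) := Branch {
  Lu : graph;
  Ru : graph;
  pu : morph L Lu;
  qu : morph Lu Ru;
  pu_total : totalm pu;
  pu_inj : injm pu;
  qu_nodes : forall v : gV L, exists y,
      obind (mV qu) (mV pu v) = Some y /\
      forall w, mV qu w = Some y -> mV pu v = Some w;
  qu_edges : forall e : gE L, exists y,
      obind (mE qu) (mE pu e) = Some y /\
      forall w, mE qu w = Some y -> mE pu e = Some w;
  Q_nonempty : exists (v : gV L) (w : gV Lu), mV pu v = Some w /\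
      exists e : gE Lu, w \in conn e /\ forall e0, mE pu e0 <> Some e }.

Record rule := Rule {
  rL : graph;
  rR : graph;
  rr : morph rL rR;
  rU : seq (branch rL) }.

Inductive inst (rho : rule) :
    nat -> forall Lb Rb : graph, morph (rL rho) Lb -> morph Lb Rb -> Prop :=
| inst0 : @inst rho 0 _ _ (idm (rL rho)) (rr rho)
| instS : forall n (Lb Rb : graph) (pi : morph (rL rho) Lb) (ga : morph Lb Rb),
    @inst rho n _ _ pi ga ->
    forall u : branch (rL rho), List.In u (rU rho) ->
    forall (Lbu : graph) (p' : morph Lb Lbu) (pi' : morph (Lu u) Lbu),
    is_pushout pi (pu u) p' pi' ->
    forall (Rbu : graph) (al : morph Rb Rbu) (be : morph (Ru u) Rbu),
    is_pushout (mcomp ga pi) (mcomp (qu u) (pu u)) al be ->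
    forall eta : morph Lbu Rbu,
    meq (mcomp eta p') (mcomp al ga) -> meq (mcomp eta pi') (mcomp be (qu u)) ->
    @inst rho n.+1 _ _ (mcomp p' pi) eta.

(* Hypothesis of the lemma: for every u in U, with outer pushout morphism
   alpha_u : R ⇀ Rbar_u of (id_L, r) ⊕ u, every edge of Rbar_u without
   alpha_u-preimage is incident to a node of Rbar_u without alpha_u-preimage.
   (Only the outer pushout of r o id_L and q_u o p_u is relevant.) *)
Definition new_edges_attached (rho : rule) : Prop :=
  forall u : branch (rL rho), List.In u (rU rho) ->
  forall (Rbu : graph) (al : morph (rR rho) Rbu) (be : morph (Ru u) Rbu),
    is_pushout (mcomp (rr rho) (idm (rL rho))) (mcomp (qu u) (pu u)) al be ->
    forall e : gE Rbu, (forall e0, mE al e0 <> Some e) ->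
      exists v : gV Rbu, v \in conn e /\ forall v0, mV al v0 <> Some v.

End Graphs.

(* Main.v *)
Require Import Defs.
From HB Require Import structures.
From mathcomp Require Import all_boot.
From Stdlib Require Import Setoid Morphisms.
From Stdlib Require List.

Set Implicit Arguments.
Unset Strict Implicit.
Unset Printing Implicit Defensive.


Section Basics.
Variable Lab : finType.
Variable ar : Lab -> nat.
Local Notation gr := (graph ar).

Definition inimV (X Y : gr) (f : morph X Y) (y : gV Y) : bool :=
  [exists x, mV f x == Some y].
Definition inimE (X Y : gr) (f : morph X Y) (y : gE Y) : bool :=
  [exists x, mE f x == Some y].

Lemma inimVP (X Y : gr) (f : morph X Y) y :
  reflect (exists x, mV f x = Some y) (inimV f y).
Proof.
apply: (iffP existsP) => [[x /eqP]|[x Hx]]; first by exists x.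
by exists x; rewrite Hx.
Qed.
Lemma inimEP (X Y : gr) (f : morph X Y) y :
  reflect (exists x, mE f x = Some y) (inimE f y).
Proof.
apply: (iffP existsP) => [[x /eqP]|[x Hx]]; first by exists x.
by exists x; rewrite Hx.
Qed.

Lemma map_obind (T U V : Type) (f : T -> option U) (h : U -> option V) s t :
  map f s = map Some t -> map h t = map (fun v => obind h (f v)) s.
Proof.
elim: s t => [|x s IH] [|y t] //= [Hx Hs]; by rewrite Hx /= (IH _ Hs).
Qed.

Lemma pmap_all (T U : Type) (f : T -> option U) s :
  all (fun y => isSome (f y)) s -> map Some (pmap f s) = map f s.
Proof.
elim: s => [|x s IH] //= /andP[]; case: (f x) => //= y _ /IH ->; done.
Qed.

Lemma map_in (T U : eqType) (f : T -> option U) s t x y :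
  map f s = map Some t -> x \in s -> f x = Some y -> y \in t.
Proof.
elim: s t => [|x0 s IH] [|y0 t] //= [Hx Hs]; rewrite inE => /orP[/eqP->|Hin] Hf.
  by move: Hx; rewrite Hf => [[->]]; rewrite inE eqxx.
by rewrite inE (IH _ Hs Hin Hf) orbT.
Qed.

Lemma map_in2 (T U : eqType) (f : T -> option U) s t y :
  map f s = map Some t -> y \in t -> exists2 x, x \in s & f x = Some y.
Proof.
elim: s t => [|x0 s IH] [|y0 t] //= [Hx Hs]; rewrite inE => /orP[/eqP->|Hin].
  by exists x0; rewrite ?inE ?eqxx.
by have [x Hx1 Hx2] := IH _ Hs Hin; exists x; rewrite ?inE ?Hx1 ?orbT.
Qed.

Lemma map_def (T U : eqType) (f : T -> option U) s t x :
  map f s = map Some t -> x \in s -> f x <> None.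
Proof.
elim: s t => [|x0 s IH] [|y0 t] //= [Hx Hs]; rewrite inE => /orP[/eqP->|Hin].
  by rewrite Hx.
exact: IH Hs Hin.
Qed.

Lemma meq_refl (X Y : gr) (f : morph X Y) : meq f f.
Proof. by split. Qed.
Lemma meq_sym (X Y : gr) (f g : morph X Y) : meq f g -> meq g f.
Proof. by case=> H1 H2; split=> x; rewrite ?H1 ?H2. Qed.
Lemma meq_trans (X Y : gr) (f g h : morph X Y) : meq f g -> meq g h -> meq f h.
Proof. by case=> H1 H2 [H3 H4]; split=> x; rewrite ?H1 ?H2 ?H3 ?H4. Qed.
Lemma mcompA (X Y Z W : gr) (f : morph X Y) (g : morph Y Z) (h : morph Z W) :
  meq (mcomp h (mcomp g f)) (mcomp (mcomp h g) f).
Proof. by split=> x /=; [case: (mV f x)|case: (mE f x)]. Qed.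
Lemma mcomp_congr (X Y Z : gr) (f f' : morph X Y) (g g' : morph Y Z) :
  meq f f' -> meq g g' -> meq (mcomp g f) (mcomp g' f').
Proof.
case=> H1 H2 [H3 H4]; split=> x /=; rewrite ?H1 ?H2.
  by case: (mV f' x) => //= y; rewrite H3.
by case: (mE f' x) => //= y; rewrite H4.
Qed.
Lemma mcomp_idl (X Y : gr) (f : morph X Y) : meq (mcomp (idm Y) f) f.
Proof. by split=> x /=; [case: (mV f x)|case: (mE f x)]. Qed.
Lemma mcomp_idr (X Y : gr) (f : morph X Y) : meq (mcomp f (idm X)) f.
Proof. by split. Qed.

Lemma meqV (X Y : gr) (f g : morph X Y) : meq f g -> forall x, mV f x = mV g x.
Proof. by case. Qed.
Lemma meqE (X Y : gr) (f g : morph X Y) : meq f g -> forall x, mE f x = mE g x.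
Proof. by case. Qed.

End Basics.


Section PO.
Variable Lab : finType.
Variable ar : Lab -> nat.
Local Notation gr := (graph ar).
Variables (A B C : gr) (a : morph A B) (c : morph A C).
Hypothesis Hct : totalm c.
Hypothesis Hci : injm c.

Definition NV := {y : gV C | ~~ inimV c y}.

Definition gN (y : gV C) : option (gV B + NV)%type :=
  match [pick x | mV c x == Some y] with
  | Some x => omap inl (mV a x)
  | None => omap (@inr (gV B) NV) (insub y)
  end.

Lemma gN_img x y : mV c x = Some y -> gN y = omap inl (mV a x).
Proof.
move=> Hxy; rewrite /gN; case: pickP => [x' /eqP Hx'|H].
  by rewrite (Hci.1 _ _ _ Hx' Hxy).
by move: (H x); rewrite Hxy eqxx.
Qed.

Lemma gN_new y (Hy : ~~ inimV c y) : gN y = Some (inr (exist _ y Hy)).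
Proof.
rewrite /gN; case: pickP => [x /eqP Hx|_].
  by move: Hy; case/inimVP; exists x.
by rewrite (insubT (fun y => ~~ inimV c y) Hy).
Qed.

Definition NE := {e : gE C | ~~ inimE c e && all (fun y => isSome (gN y)) (conn e)}.

Definition PConn (e : (gE B + NE)%type) : seq (gV B + NV)%type :=
  match e with inl e => map inl (conn e) | inr e => pmap gN (conn (val e)) end.
Definition PLab (e : (gE B + NE)%type) : Lab :=
  match e with inl e => lab e | inr e => lab (val e) end.

Lemma PConn_ar e : size (PConn e) = ar (PLab e).
Proof.
case: e => [e|[e He]] /=; first by rewrite size_map conn_ar.
rewrite size_pmap -conn_ar; move/andP: He => [_ Hall].
by apply/eqP; rewrite -all_count.
Qed.

Definition POg : gr := @Graph _ ar (gV B + NV)%type (gE B + NE)%type PConn PLab PConn_ar.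

Lemma bP_morph : is_morph (G:=B) (H:=POg) (fun z => Some (inl z)) (fun e => Some (inl e)).
Proof. by move=> e e' [<-] /=; rewrite -map_comp. Qed.
Definition bP : morph B POg := Morph bP_morph.

Definition dPE (e : gE C) : option (gE B + NE)%type :=
  match [pick x | mE c x == Some e] with
  | Some x => omap inl (mE a x)
  | None => omap (@inr (gE B) NE) (insub e)
  end.

Lemma dPE_img x e : mE c x = Some e -> dPE e = omap inl (mE a x).
Proof.
move=> Hxy; rewrite /dPE; case: pickP => [x' /eqP Hx'|H].
  by rewrite (Hci.2 _ _ _ Hx' Hxy).
by move: (H x); rewrite Hxy eqxx.
Qed.

Lemma dPE_new e (He : ~~ inimE c e && all (fun y => isSome (gN y)) (conn e)) :
  dPE e = Some (inr (exist _ e He)).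
Proof.
rewrite /dPE; case: pickP => [x /eqP Hx|_].
  by have /andP[/inimEP H _] := He; case: H; exists x.
by rewrite (insubT (fun e => ~~ inimE c e && all (fun y => isSome (gN y)) (conn e)) He).
Qed.

Lemma dPE_none e : ~~ inimE c e -> ~~ all (fun y => isSome (gN y)) (conn e) -> dPE e = None.
Proof.
move=> H1 H2; rewrite /dPE; case: pickP => [x /eqP Hx|_].
  by case/inimEP: H1; exists x.
by rewrite insubF //; apply/negbTE; rewrite negb_and H2 orbT.
Qed.

Lemma gN_c v : obind gN (mV c v) = omap inl (mV a v).
Proof.
case Hv: (mV c v) => [y|] /=; first exact: gN_img.
by case: (Hct.1 v).
Qed.

Lemma dP_morph : is_morph (G:=C) (H:=POg) gN dPE.
Proof.
move=> e e'; case He: (inimE c e).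
  case/inimEP: He => x Hx; rewrite (dPE_img Hx).
  case Hax: (mE a x) => [e''|] //= [<-] /=.
  have [l1 c1] := mP Hx; have [l2 c2] := mP Hax.
  split; first by rewrite l2 -l1.
  rewrite (map_obind gN c1) (eq_map gN_c) (map_comp (omap inl) (mV a)) c2.
  by rewrite -!map_comp.
case Hk: (all (fun y => isSome (gN y)) (conn e)).
  have He2 : ~~ inimE c e && all (fun y => isSome (gN y)) (conn e) by rewrite He Hk.
  rewrite (dPE_new He2) => [[<-]] /=; split=> //.
  by rewrite pmap_all.
by rewrite dPE_none ?He ?Hk.
Qed.
Definition dP : morph C POg := Morph dP_morph.

Lemma PO_comm : meq (mcomp bP a) (mcomp dP c).
Proof.
split=> x /=.
  by rewrite gN_c; case: (mV a x).
case Hx: (mE c x) => [e|] /=; last by case: (Hct.2 x).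
by rewrite (dPE_img Hx); case: (mE a x).
Qed.

Section Univ.
Variables (D' : gr) (b' : morph B D') (d' : morph C D').
Hypothesis Hc : meq (mcomp b' a) (mcomp d' c).

Definition uV (p : gV POg) : option (gV D') :=
  match p with inl z => mV b' z | inr y => mV d' (val y) end.
Definition uE (p : gE POg) : option (gE D') :=
  match p with inl z => mE b' z | inr y => mE d' (val y) end.

Lemma uV_gN y : obind uV (gN y) = mV d' y.
Proof.
case Hy: (inimV c y).
  case/inimVP: Hy => x Hx; rewrite (gN_img Hx).
  have := meqV Hc x; rewrite /= Hx /=; case: (mV a x) => //=.
have Hy' : ~~ inimV c y by rewrite Hy.
by rewrite (gN_new Hy').
Qed.

Lemma u_morph : is_morph uV uE.
Proof.
case=> [e|[e He]] e' /= Hu.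
  have [l c1] := mP Hu; split=> //; by rewrite -map_comp.
have [l c1] := mP Hu; split=> //.
move/andP: He => [_ Hall].
rewrite -c1 (map_obind uV (esym (pmap_all Hall))).
by apply: eq_map => y; rewrite uV_gN.
Qed.
Definition uP : morph POg D' := Morph u_morph.

Lemma uP_b : meq (mcomp uP bP) b'.
Proof. by split. Qed.

Lemma uP_d : meq (mcomp uP dP) d'.
Proof.
split=> y /=; first exact: uV_gN.
case He: (inimE c y).
  case/inimEP: He => x Hx; rewrite (dPE_img Hx).
  have := meqE Hc x; rewrite /= Hx /=; case: (mE a x) => //=.
case Hk: (all (fun y => isSome (gN y)) (conn y)).
  have He2 : ~~ inimE c y && all (fun y => isSome (gN y)) (conn y) by rewrite He Hk.
  by rewrite (dPE_new He2).
rewrite dPE_none ?He ?Hk //=.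
case Hd: (mE d' y) => [e'|] //.
have [_ c1] := mP Hd.
move/negbT: Hk => /allPn [v Hv Hnv].
move: (map_def c1 Hv); rewrite -uV_gN; move: Hnv; case: (gN v) => //.
Qed.

Lemma uP_uniq (u' : morph POg D') : meq (mcomp u' bP) b' -> meq (mcomp u' dP) d' -> meq u' uP.
Proof.
move=> [H1 H2] [H3 H4]; split.
  case=> [z|[y Hy]] /=; first exact: H1.
  by rewrite -H3 /= gN_new.
case=> [z|[e He]] /=; first exact: H2.
by rewrite -H4 /= dPE_new.
Qed.
End Univ.

Lemma PO_is : is_pushout a c bP dP.
Proof.
split; first exact: PO_comm.
move=> D' b' d' Hc; exists (uP Hc); split.
- exact: uP_b.
- exact: uP_d.
- by move=> u' H1 H2; apply: uP_uniq.
Qed.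

End PO.


Section Char.
Variable Lab : finType.
Variable ar : Lab -> nat.
Local Notation gr := (graph ar).

Lemma inv_ti (X Y : gr) (u : morph X Y) (v : morph Y X) :
  meq (mcomp v u) (idm X) -> totalm u /\ injm u.
Proof.
move=> [H1 H2]; split; split.
- by move=> x; move: (H1 x) => /=; case: (mV u x).
- by move=> x; move: (H2 x) => /=; case: (mE u x).
- move=> x y z Hx Hy; move: (H1 x) (H1 y) => /=; rewrite Hx Hy => -> [->]; done.
- move=> x y z Hx Hy; move: (H2 x) (H2 y) => /=; rewrite Hx Hy => -> [->]; done.
Qed.

Lemma inv_surj (X Y : gr) (u : morph X Y) (v : morph Y X) :
  meq (mcomp u v) (idm Y) -> surjm u.
Proof.
move=> [H1 H2]; split.
- by move=> y; move: (H1 y) => /=; case: (mV v y) => //= x Hx; exists x.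
- by move=> y; move: (H2 y) => /=; case: (mE v y) => //= x Hx; exists x.
Qed.

Section PO.
Variables (A B C D : gr) (a : morph A B) (c : morph A C) (b : morph B D) (d : morph C D).
Hypothesis Hpo : is_pushout a c b d.

Lemma po_ex (D' : gr) (b' : morph B D') (d' : morph C D') :
  meq (mcomp b' a) (mcomp d' c) ->
  exists u : morph D D', meq (mcomp u b) b' /\ meq (mcomp u d) d'.
Proof. by move=> H; have [u [H1 H2 _]] := Hpo.2 _ _ _ H; exists u. Qed.

Lemma po_uniq (D' : gr) (f g : morph D D') :
  meq (mcomp f b) (mcomp g b) -> meq (mcomp f d) (mcomp g d) -> meq f g.
Proof.
move=> Hb Hd.
have Hc : meq (mcomp (mcomp f b) a) (mcomp (mcomp f d) c).
  apply: meq_trans (meq_sym (mcompA _ _ _)) _.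
  apply: meq_trans _ (mcompA _ _ _).
  exact: mcomp_congr Hpo.1 (meq_refl _).
have [u [_ _ Hu]] := Hpo.2 _ _ _ Hc.
apply: meq_trans (Hu _ (meq_refl _) (meq_refl _)) (meq_sym _).
by apply: Hu; apply: meq_sym.
Qed.
End PO.

Lemma po_iso (A B C D D2 : gr) (a : morph A B) (c : morph A C) (b : morph B D) (d : morph C D)
   (b2 : morph B D2) (d2 : morph C D2) :
  is_pushout a c b d -> is_pushout a c b2 d2 ->
  exists (u : morph D D2) (v : morph D2 D),
    [/\ meq (mcomp u b) b2, meq (mcomp u d) d2, meq (mcomp v u) (idm D) & meq (mcomp u v) (idm D2)].
Proof.
move=> P1 P2.
have [u [Hu1 Hu2]] := po_ex P1 P2.1.
have [v [Hv1 Hv2]] := po_ex P2 P1.1.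
exists u, v; split=> //.
- apply: (po_uniq P1).
  + apply: meq_trans (meq_sym (mcompA _ _ _)) _.
    apply: meq_trans (mcomp_congr Hu1 (meq_refl _)) _.
    by apply: meq_trans Hv1 (meq_sym (mcomp_idl _)).
  + apply: meq_trans (meq_sym (mcompA _ _ _)) _.
    apply: meq_trans (mcomp_congr Hu2 (meq_refl _)) _.
    by apply: meq_trans Hv2 (meq_sym (mcomp_idl _)).
- apply: (po_uniq P2).
  + apply: meq_trans (meq_sym (mcompA _ _ _)) _.
    apply: meq_trans (mcomp_congr Hv1 (meq_refl _)) _.
    by apply: meq_trans Hu1 (meq_sym (mcomp_idl _)).
  + apply: meq_trans (meq_sym (mcompA _ _ _)) _.
    apply: meq_trans (mcomp_congr Hv2 (meq_refl _)) _.
    by apply: meq_trans Hu2 (meq_sym (mcomp_idl _)).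
Qed.

Lemma po_transfer (A B C D D2 : gr) (a : morph A B) (c : morph A C) (b : morph B D) (d : morph C D)
   (u : morph D D2) (v : morph D2 D) (b2 : morph B D2) (d2 : morph C D2) :
  is_pushout a c b d -> meq (mcomp v u) (idm D) -> meq (mcomp u v) (idm D2) ->
  meq (mcomp u b) b2 -> meq (mcomp u d) d2 -> is_pushout a c b2 d2.
Proof.
move=> P Hvu Huv Hb Hd; split.
  apply: meq_trans (mcomp_congr (meq_refl _) (meq_sym Hb)) _.
  apply: meq_trans (meq_sym (mcompA _ _ _)) _.
  apply: meq_trans (mcomp_congr P.1 (meq_refl _)) _.
  apply: meq_trans (mcompA _ _ _) _.
  exact: mcomp_congr (meq_refl _) Hd.
move=> D' b' d' Hc.
have [w [Hw1 Hw2]] := po_ex P Hc.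
have E1 : forall (f : morph D2 D') X (g : morph X D) (g2 : morph X D2),
    meq (mcomp u g) g2 -> meq (mcomp (mcomp f u) g) (mcomp f g2).
  move=> f X g g2 H; apply: meq_trans (meq_sym (mcompA _ _ _)) _.
  exact: mcomp_congr H (meq_refl _).
have E2 : forall X (g : morph X D) (g2 : morph X D2),
    meq (mcomp u g) g2 -> meq (mcomp (mcomp w v) g2) (mcomp w g).
  move=> X g g2 H; apply: meq_trans (meq_sym (mcompA _ _ _)) _.
  apply: meq_trans (mcomp_congr (mcomp_congr (meq_sym H) (meq_refl v)) (meq_refl w)) _.
  apply: meq_trans (mcomp_congr (mcompA _ _ _) (meq_refl w)) _.
  apply: meq_trans (mcomp_congr (mcomp_congr (meq_refl g) Hvu) (meq_refl w)) _.
  exact: mcomp_congr (mcomp_idl _) (meq_refl _).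
exists (mcomp w v); split.
- exact: meq_trans (E2 _ _ _ Hb) Hw1.
- exact: meq_trans (E2 _ _ _ Hd) Hw2.
- move=> u' H1 H2.
  have Hu'u : meq (mcomp u' u) w.
    apply: (po_uniq P).
    + apply: meq_trans (E1 _ _ _ _ Hb) _; exact: meq_trans H1 (meq_sym Hw1).
    + apply: meq_trans (E1 _ _ _ _ Hd) _; exact: meq_trans H2 (meq_sym Hw2).
  apply: meq_trans (meq_sym (mcomp_idr u')) _.
  apply: meq_trans (mcomp_congr (meq_sym Huv) (meq_refl _)) _.
  apply: meq_trans (mcompA _ _ _) _.
  exact: mcomp_congr (meq_refl _) Hu'u.
Qed.

Lemma po_meq (A B C D : gr) (a : morph A B) (c : morph A C) (b b2 : morph B D) (d d2 : morph C D) :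
  is_pushout a c b d -> meq b b2 -> meq d d2 -> is_pushout a c b2 d2.
Proof.
move=> P Hb Hd; apply: (po_transfer (u := idm D) (v := idm D) P).
- exact: mcomp_idl.
- exact: mcomp_idl.
- exact: meq_trans (mcomp_idl _) Hb.
- exact: meq_trans (mcomp_idl _) Hd.
Qed.

End Char.


Section Char2.
Variable Lab : finType.
Variable ar : Lab -> nat.
Local Notation gr := (graph ar).

Lemma morph_conn_def (X Y : gr) (f : morph X Y) e e' v :
  mE f e = Some e' -> v \in conn e -> mV f v <> None.
Proof. by move=> H; have [_ c1] := mP H; apply: map_def c1. Qed.

Lemma morph_conn_in (X Y : gr) (f : morph X Y) e e' v w :
  mE f e = Some e' -> v \in conn e -> mV f v = Some w -> w \in conn e'.
Proof. by move=> H; have [_ c1] := mP H; apply: map_in c1. Qed.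

Lemma morph_conn_in2 (X Y : gr) (f : morph X Y) e e' w :
  mE f e = Some e' -> w \in conn e' -> exists2 v, v \in conn e & mV f v = Some w.
Proof. by move=> H; have [_ c1] := mP H; apply: map_in2 c1. Qed.

Variables (A B C D : gr) (a : morph A B) (c : morph A C) (b : morph B D) (d : morph C D).
Hypothesis Hct : totalm c.
Hypothesis Hci : injm c.
Hypothesis Hpo : is_pushout a c b d.

Lemma char_iso : exists u : morph (POg a c) D,
  [/\ (forall z, mV b z = mV u (inl z)), (forall e, mE b e = mE u (inl e)),
      (forall y, mV d y = obind (mV u) (gN a c y)),
      (forall e, mE d e = obind (mE u) (dPE a c e)) &
      [/\ totalm u, injm u & surjm u]].
Proof.
have [u [v [H1 H2 H3 H4]]] := po_iso (PO_is a Hct Hci) Hpo.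
have [ut ui] := inv_ti H3.
exists u; split.
- by move=> z; rewrite -(meqV H1).
- by move=> z; rewrite -(meqE H1).
- by move=> z; rewrite -(meqV H2).
- by move=> z; rewrite -(meqE H2).
- by split=> //; apply: inv_surj H4.
Qed.

Lemma C1 : totalm b /\ injm b.
Proof.
have [u [hb hbe _ _ [ut ui _]]] := char_iso.
split; split.
- by move=> z; rewrite hb; apply: ut.1.
- by move=> z; rewrite hbe; apply: ut.2.
- by move=> x y z; rewrite !hb => Hx Hy; have [] := ui.1 _ _ _ Hx Hy.
- by move=> x y z; rewrite !hbe => Hx Hy; have [] := ui.2 _ _ _ Hx Hy.
Qed.

Lemma C2V y : ~~ inimV c y -> mV d y <> None.
Proof.
move=> Hy; have [u [_ _ hd _ [ut _ _]]] := char_iso.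
by rewrite hd (gN_new a Hy) /=; apply: ut.1.
Qed.

Lemma C2E e : ~~ inimE c e -> all (fun y => isSome (mV d y)) (conn e) -> mE d e <> None.
Proof.
move=> He Hall; have [u [_ _ hd hde [ut _ _]]] := char_iso.
have Hall' : all (fun y => isSome (gN a c y)) (conn e).
  by apply: sub_all Hall => y; rewrite hd; case: (gN a c y).
have He2 : ~~ inimE c e && all (fun y => isSome (gN a c y)) (conn e) by rewrite He Hall'.
by rewrite hde (dPE_new He2) /=; apply: ut.2.
Qed.

Lemma C2E' e : ~~ inimE c e -> (forall y, y \in conn e -> mV d y <> None) -> mE d e <> None.
Proof.
move=> He H; apply: C2E He _; apply/allP => y /H; by case: (mV d y).
Qed.

Lemma C3V y1 y2 w : ~~ inimV c y1 -> ~~ inimV c y2 -> mV d y1 = Some w -> mV d y2 = Some w -> y1 = y2.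
Proof.
move=> H1 H2; have [u [_ _ hd _ [_ ui _]]] := char_iso.
rewrite !hd (gN_new a H1) (gN_new a H2) /= => E1 E2.
by have [] := ui.1 _ _ _ E1 E2.
Qed.

Lemma C3E y1 y2 w : ~~ inimE c y1 -> ~~ inimE c y2 -> mE d y1 = Some w -> mE d y2 = Some w -> y1 = y2.
Proof.
move=> H1 H2; have [u [_ _ hd hde [_ ui _]]] := char_iso.
rewrite !hde /dPE.
case: pickP => [x /eqP Hx|_]; first by case/inimEP: H1; exists x.
case: pickP => [x /eqP Hx|_]; first by case/inimEP: H2; exists x.
case: insubP => //= [[z1 Hz1] _ E1]; case: insubP => //= [[z2 Hz2] _ E2].
move=> F1 F2; have := ui.2 _ _ _ F1 F2 => -[Ez]; subst z2.
by rewrite -E1 -E2.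
Qed.

Lemma C4V y z w : ~~ inimV c y -> mV d y = Some w -> mV b z <> Some w.
Proof.
move=> H; have [u [hb _ hd _ [_ ui _]]] := char_iso.
rewrite hd hb (gN_new a H) /= => E1 E2.
by have := ui.1 _ _ _ E1 E2.
Qed.

Lemma C4E y z w : ~~ inimE c y -> mE d y = Some w -> mE b z <> Some w.
Proof.
move=> H; have [u [_ hbe _ hde [_ ui _]]] := char_iso.
rewrite hde hbe /dPE.
case: pickP => [x /eqP Hx|_]; first by case/inimEP: H; exists x.
case: insubP => //= [[z1 Hz1] _ E1] F1 F2.
by have := ui.2 _ _ _ F1 F2.
Qed.

Lemma C5V w : (exists z, mV b z = Some w) \/ (exists2 y, ~~ inimV c y & mV d y = Some w).
Proof.
have [u [hb _ hd _ [_ _ us]]] := char_iso.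
have [[z|[y Hy]] Hp] := us.1 w.
  by left; exists z; rewrite hb.
by right; exists y => //; rewrite hd (gN_new a Hy).
Qed.

Lemma C5E w : (exists z, mE b z = Some w) \/ (exists2 y, ~~ inimE c y & mE d y = Some w).
Proof.
have [u [_ hbe _ hde [_ _ us]]] := char_iso.
have [[z|[y Hy]] Hp] := us.2 w.
  by left; exists z; rewrite hbe.
right; exists y; first by case/andP: (Hy).
by rewrite hde (dPE_new Hy).
Qed.

End Char2.


Lemma card_pinj (X Y : finType) (f : X -> option Y) (S : {set X}) (T : {set Y}) :
  pinj f -> (forall x, x \in S -> exists2 y, f x = Some y & y \in T) -> #|S| <= #|T|.
Proof.
move=> Hi HS.
have E1 : #|[set f x | x in S]| = #|S|.
  apply: card_in_imset => x y Hx Hy E.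
  have [z Hz _] := HS x Hx; exact: Hi Hz (etrans (esym E) Hz).
have E2 : #|[set Some y | y in T]| = #|T| by apply: card_imset => x y [].
rewrite -E1 -E2; apply: subset_leq_card; apply/subsetP => z /imsetP [x Hx ->].
by have [y -> Hy] := HS x Hx; apply: imset_f.
Qed.

Lemma card_pinj_lt (X Y : finType) (f : X -> option Y) (S : {set X}) (T : {set Y}) t :
  pinj f -> (forall x, x \in S -> exists2 y, f x = Some y & y \in T) ->
  t \in T -> (forall x, f x <> Some t) -> #|S| < #|T|.
Proof.
move=> Hi HS Ht Hnt.
rewrite (cardsD1 t T) Ht add1n ltnS; apply: card_pinj Hi _ => x Hx.
have [y Hy HyT] := HS x Hx; exists y => //.
rewrite in_setD1 HyT andbT; apply/eqP => E; subst; exact: Hnt Hy.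
Qed.

Section Misc.
Variable Lab : finType.
Variable ar : Lab -> nat.
Local Notation gr := (graph ar).

Lemma comp_inj (X Y Z : gr) (f : morph X Y) (g : morph Y Z) :
  injm f -> injm g -> injm (mcomp g f).
Proof.
move=> [f1 f2] [g1 g2]; split=> x y z /=.
  case Hx: (mV f x) => [a|] //= Ha; case Hy: (mV f y) => [b|] //= Hb.
  by apply: f1 Hx _; rewrite (g1 _ _ _ Ha Hb).
case Hx: (mE f x) => [a|] //= Ha; case Hy: (mE f y) => [b|] //= Hb.
by apply: f2 Hx _; rewrite (g2 _ _ _ Ha Hb).
Qed.

Lemma comp_total (X Y Z : gr) (f : morph X Y) (g : morph Y Z) :
  totalm f -> totalm g -> totalm (mcomp g f).
Proof.
move=> [f1 f2] [g1 g2]; split=> x /=.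
  case Hx: (mV f x) => [a|] /=; [exact: g1 | by case: (f1 x)].
case Hx: (mE f x) => [a|] /=; [exact: g2 | by case: (f2 x)].
Qed.

Lemma idm_ti (X : gr) : totalm (idm X) /\ injm (idm X).
Proof. by split; split=> // x y z [->] []. Qed.

Lemma tV (X Y : gr) (f : morph X Y) : totalm f -> forall x, exists y, mV f x = Some y.
Proof. by move=> [H _] x; case E: (mV f x) => [y|]; [exists y | case: (H x)]. Qed.
Lemma tE (X Y : gr) (f : morph X Y) : totalm f -> forall x, exists y, mE f x = Some y.
Proof. by move=> [_ H] x; case E: (mE f x) => [y|]; [exists y | case: (H x)]. Qed.

Lemma CcommV (A B C D : gr) (a : morph A B) (c : morph A C) (b : morph B D) (d : morph C D) :
  meq (mcomp b a) (mcomp d c) -> forall x y, mV c x = Some y -> mV d y = obind (mV b) (mV a x).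
Proof. by move=> H x y Hx; have := meqV H x; rewrite /= Hx /= => ->. Qed.
Lemma CcommE (A B C D : gr) (a : morph A B) (c : morph A C) (b : morph B D) (d : morph C D) :
  meq (mcomp b a) (mcomp d c) -> forall x y, mE c x = Some y -> mE d y = obind (mE b) (mE a x).
Proof. by move=> H x y Hx; have := meqE H x; rewrite /= Hx /= => ->. Qed.

Lemma compV (X Y Z : gr) (f : morph X Y) (g : morph Y Z) x y :
  mV f x = Some y -> mV (mcomp g f) x = mV g y.
Proof. by move=> /= ->. Qed.
Lemma compE (X Y Z : gr) (f : morph X Y) (g : morph Y Z) x y :
  mE f x = Some y -> mE (mcomp g f) x = mE g y.
Proof. by move=> /= ->. Qed.

Variable L : gr.
Variable u : branch L.

Lemma qp_total : totalm (mcomp (qu u) (pu u)).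
Proof.
split=> v.
  by have [y [Hy _]] := qu_nodes u v; rewrite /= Hy.
by have [y [Hy _]] := qu_edges u v; rewrite /= Hy.
Qed.

Lemma qp_inj : injm (mcomp (qu u) (pu u)).
Proof.
split=> v1 v2 z H1 H2.
  have [y [Hy Hu]] := qu_nodes u v1; move: H1 H2 => /=; rewrite Hy => -[<-].
  have [w Hw] := tV (pu_total u) v2; rewrite Hw /= => /Hu Hw1.
  exact: (pu_inj u).1 Hw1 Hw.
have [y [Hy Hu]] := qu_edges u v1; move: H1 H2 => /=; rewrite Hy => -[<-].
have [w Hw] := tE (pu_total u) v2; rewrite Hw /= => /Hu Hw1.
exact: (pu_inj u).2 Hw1 Hw.
Qed.

Lemma qu_newV y z : ~~ inimV (pu u) y -> mV (qu u) y = Some z -> ~~ inimV (mcomp (qu u) (pu u)) z.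
Proof.
move=> Hy Hz; apply/inimVP => -[v Hv].
have [y' [Hy' Hu]] := qu_nodes u v; move: Hv => /=; rewrite Hy' => -[E]; subst y'.
by move/negP: Hy; apply; apply/inimVP; exists v; apply: Hu.
Qed.

Lemma qu_newE y z : ~~ inimE (pu u) y -> mE (qu u) y = Some z -> ~~ inimE (mcomp (qu u) (pu u)) z.
Proof.
move=> Hy Hz; apply/inimEP => -[v Hv].
have [y' [Hy' Hu]] := qu_edges u v; move: Hv => /=; rewrite Hy' => -[E]; subst y'.
by move/negP: Hy; apply; apply/inimEP; exists v; apply: Hu.
Qed.

End Misc.

Lemma inst_pi (Lab : finType) (ar : Lab -> nat) (rho : rule ar) n Lb Rb
   (pi : morph (rL rho) Lb) (ga : morph Lb Rb) :
  inst n pi ga -> totalm pi /\ injm pi.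
Proof.
elim=> [|{}n {}Lb {}Rb {}pi {}ga I [IHt IHi] u Hu Lbu p' pi' Hpo1 Rbu al be Hpo2 eta He1 He2].
  exact: idm_ti.
have [pt pi0] := C1 (pu_total u) (pu_inj u) Hpo1.
by split; [apply: comp_total | apply: comp_inj].
Qed.


#[export] Instance meq_equiv (Lab : finType) (ar : Lab -> nat) (X Y : graph ar) :
  Equivalence (@meq _ _ X Y).
Proof. split; [exact: meq_refl | exact: meq_sym | exact: meq_trans]. Qed.
#[export] Instance mcomp_proper (Lab : finType) (ar : Lab -> nat) (X Y Z : graph ar) :
  Proper (@meq _ _ Y Z ==> @meq _ _ X Y ==> @meq _ _ X Z) (@mcomp _ _ X Y Z).
Proof. move=> g g' Hg f f' Hf; exact: mcomp_congr. Qed.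

Section Mono.
Variable Lab : finType.
Variable ar : Lab -> nat.
Local Notation gr := (graph ar).
Variables (A B C D : gr) (a : morph A B) (c : morph A C) (b : morph B D) (d : morph C D).
Hypothesis Hct : totalm c.
Hypothesis Hci : injm c.
Hypothesis Hpo : is_pushout a c b d.

Lemma po_mono (E : gr) (f : morph D E) (b' : morph B E) (d' : morph C E) :
  meq (mcomp f b) b' -> meq (mcomp f d) d' -> totalm b' -> injm b' ->
  (forall y, ~~ inimV c y -> mV d' y <> None) ->
  (forall e, ~~ inimE c e -> mE d e <> None -> mE d' e <> None) ->
  (forall y1 y2 z, ~~ inimV c y1 -> ~~ inimV c y2 -> mV d' y1 = Some z -> mV d' y2 = Some z -> y1 = y2) ->
  (forall y1 y2 z, ~~ inimE c y1 -> ~~ inimE c y2 -> mE d' y1 = Some z -> mE d' y2 = Some z -> y1 = y2) ->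
  (forall y z w, ~~ inimV c y -> mV d' y = Some w -> mV b' z <> Some w) ->
  (forall y z w, ~~ inimE c y -> mE d' y = Some w -> mE b' z <> Some w) ->
  totalm f /\ injm f.
Proof.
move=> Hfb Hfd [b't1 b't2] [b'i1 b'i2] dV dE iV iE jV jE.
have fbV : forall z x, mV b z = Some x -> mV f x = mV b' z.
  by move=> z x Hx; rewrite -(meqV Hfb) /= Hx.
have fbE : forall z x, mE b z = Some x -> mE f x = mE b' z.
  by move=> z x Hx; rewrite -(meqE Hfb) /= Hx.
have fdV : forall z x, mV d z = Some x -> mV f x = mV d' z.
  by move=> z x Hx; rewrite -(meqV Hfd) /= Hx.
have fdE : forall z x, mE d z = Some x -> mE f x = mE d' z.
  by move=> z x Hx; rewrite -(meqE Hfd) /= Hx.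
split; split.
- move=> x; case: (C5V Hct Hci Hpo x) => [[z Hz]|[y Hy Hdy]].
    by rewrite (fbV _ _ Hz).
  by rewrite (fdV _ _ Hdy); apply: dV.
- move=> x; case: (C5E Hct Hci Hpo x) => [[z Hz]|[y Hy Hdy]].
    by rewrite (fbE _ _ Hz).
  by rewrite (fdE _ _ Hdy); apply: dE => //; rewrite Hdy.
- move=> x1 x2 t.
  case: (C5V Hct Hci Hpo x1) => [[z1 Hz1]|[y1 Hy1 Hdy1]];
  case: (C5V Hct Hci Hpo x2) => [[z2 Hz2]|[y2 Hy2 Hdy2]].
  + rewrite (fbV _ _ Hz1) (fbV _ _ Hz2) => E1 E2.
    by move: Hz1; rewrite (b'i1 _ _ _ E1 E2) Hz2 => -[].
  + rewrite (fbV _ _ Hz1) (fdV _ _ Hdy2) => E1 E2.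
    by have := jV _ z1 _ Hy2 E2.
  + rewrite (fdV _ _ Hdy1) (fbV _ _ Hz2) => E1 E2.
    by have := jV _ z2 _ Hy1 E1.
  + rewrite (fdV _ _ Hdy1) (fdV _ _ Hdy2) => E1 E2.
    by move: Hdy1; rewrite (iV _ _ _ Hy1 Hy2 E1 E2) Hdy2 => -[].
- move=> x1 x2 t.
  case: (C5E Hct Hci Hpo x1) => [[z1 Hz1]|[y1 Hy1 Hdy1]];
  case: (C5E Hct Hci Hpo x2) => [[z2 Hz2]|[y2 Hy2 Hdy2]].
  + rewrite (fbE _ _ Hz1) (fbE _ _ Hz2) => E1 E2.
    by move: Hz1; rewrite (b'i2 _ _ _ E1 E2) Hz2 => -[].
  + rewrite (fbE _ _ Hz1) (fdE _ _ Hdy2) => E1 E2.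
    by have := jE _ z1 _ Hy2 E2.
  + rewrite (fdE _ _ Hdy1) (fbE _ _ Hz2) => E1 E2.
    by have := jE _ z2 _ Hy1 E1.
  + rewrite (fdE _ _ Hdy1) (fdE _ _ Hdy2) => E1 E2.
    by move: Hdy1; rewrite (iE _ _ _ Hy1 Hy2 E1 E2) Hdy2 => -[].
Qed.
End Mono.

Section NewEdge.
Variable Lab : finType.
Variable ar : Lab -> nat.
Local Notation gr := (graph ar).
Variable rho : rule ar.
Hypothesis Hrho : new_edges_attached rho.

Lemma new_edge (u : branch (rL rho)) (Hu : List.In u (rU rho)) (Lb Rb : gr)
  (pi : morph (rL rho) Lb) (ga : morph Lb Rb) (rh : morph (rR rho) Rb)
  (Rbu : gr) (al : morph Rb Rbu) (be : morph (Ru u) Rbu) :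
  meq (mcomp ga pi) (mcomp rh (rr rho)) ->
  is_pushout (mcomp ga pi) (mcomp (qu u) (pu u)) al be ->
  forall e, ~~ inimE al e -> exists2 v, v \in conn e & ~~ inimV al v.
Proof.
move=> Hrh Hpo2 e He.
have qt := qp_total u; have qi := qp_inj u.
case: (C5E qt qi Hpo2 e) => [[z Hz]|[y Hy Hbe]].
  by move/inimEP: He => []; exists z.
pose a0 := mcomp (rr rho) (idm (rL rho)).
have P0 := PO_is a0 qt qi.
have Hd0 : mE (dP a0 qt qi) y <> None.
  apply: (C2E' qt qi P0) Hy _ => v Hv.
  case Hvi: (inimV (mcomp (qu u) (pu u)) v); last exact: (C2V qt qi P0 (negbT Hvi)).
  case/inimVP: Hvi => x Hx; rewrite (CcommV P0.1 Hx).
  have := morph_conn_def Hbe Hv; rewrite (CcommV Hpo2.1 Hx) (meqV Hrh x) /=.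
  by case: (mV (rr rho) x).
case Ed: (mE (dP a0 qt qi) y) => [e0|]; last done.
have [v0 [Hv0 Hnv0]] := Hrho Hu P0 (fun e1 => C4E qt qi P0 (z := e1) Hy Ed).
have [v Hv Hdv] := morph_conn_in2 Ed Hv0.
have Hvn : ~~ inimV (mcomp (qu u) (pu u)) v.
  apply/negP => /inimVP [x Hx]; move: Hdv; rewrite (CcommV P0.1 Hx) /=.
  case Er: (mV (rr rho) x) => [r|] //= [Er2].
  by apply: (Hnv0 r); rewrite /= Er2.
case Ew: (mV be v) => [w|]; last by case: (C2V qt qi Hpo2 Hvn).
exists w; first exact: morph_conn_in Hbe Hv Ew.
by apply/negP => /inimVP [z Hz]; apply: (C4V qt qi Hpo2 Hvn Ew Hz).
Qed.
End NewEdge.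


Lemma PO_ex (Lab : finType) (ar : Lab -> nat) (A B C : graph ar) (a : morph A B) (c : morph A C) :
  totalm c -> injm c -> exists (D : graph ar) (b : morph B D) (d : morph C D), is_pushout a c b d.
Proof. move=> Ht Hi; exists (POg a c), (bP a c), (dP a Ht Hi); exact: PO_is. Qed.

Lemma po_d_total (Lab : finType) (ar : Lab -> nat) (A B C D : graph ar) (a : morph A B)
   (c : morph A C) (b : morph B D) (d : morph C D) (Hct : totalm c) (Hci : injm c) :
  is_pushout a c b d -> totalm a ->
  (forall v, mV d v <> None) /\ (forall e, ~~ inimE c e -> mE d e <> None).
Proof.
move=> Hpo Hat; have [bt _] := C1 Hct Hci Hpo.
have HV : forall v, mV d v <> None.
  move=> v; case Hvi: (inimV c v); last exact: (C2V Hct Hci Hpo (negbT Hvi)).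
  case/inimVP: Hvi => x Hx; rewrite (CcommV (proj1 Hpo) Hx).
  by have [y Hy] := tV Hat x; rewrite Hy /=; have [z ->] := tV bt y.
split=> // e He; apply: (C2E' Hct Hci Hpo He) => v _; exact: HV.
Qed.

Lemma im_comp_notV (Lab : finType) (ar : Lab -> nat) (X Y Z : graph ar) (f : morph X Y) (g : morph Y Z) w :
  ~~ inimV g w -> ~~ inimV (mcomp g f) w.
Proof.
move=> H; apply/negP => /inimVP [x /=]; case: (mV f x) => //= y Hy.
by move/negP: H; apply; apply/inimVP; exists y.
Qed.

Section Main.
Variable Lab : finType.
Variable ar : Lab -> nat.
Local Notation gr := (graph ar).
Variable rho : rule ar.
Hypothesis Hrho : new_edges_attached rho.
Local Notation L := (rL rho).
Local Notation R := (rR rho).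

Definition SubOK (Lb Rb : gr) (pi : morph L Lb) (ga : morph Lb Rb) (rh : morph R Rb)
  (W : pred (gV Rb)) : Prop :=
 exists k (Lb' Rb' : gr) (pi' : morph L Lb') (ga' : morph Lb' Rb')
   (eL : morph Lb' Lb) (eR : morph Rb' Rb),
 [/\ inst k pi' ga', totalm eL /\ injm eL, totalm eR /\ injm eR,
     meq (mcomp eL pi') pi & meq (mcomp ga eL) (mcomp eR ga')] /\
 [/\ k <= #|[set w | W w && ~~ inimV rh w]|,
     (forall w, ~~ inimV eR w -> ~~ W w),
     (forall e, ~~ inimE eR e -> has (fun v => ~~ W v) (conn e)),
     (forall x, ~~ inimV eL x -> oapp (fun w => ~~ W w) true (mV ga x)) &
     (forall x, ~~ inimE eL x -> oapp (fun e => has (fun v => ~~ W v) (conn e)) true (mE ga x))].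

Definition Good (Lb Rb : gr) (pi : morph L Lb) (ga : morph Lb Rb) : Prop :=
  exists rh : morph R Rb, [/\ totalm rh, injm rh, meq (mcomp ga pi) (mcomp rh (rr rho)) &
    forall W, SubOK pi ga rh W].

Lemma good0 : Good (idm L) (rr rho).
Proof.
exists (idm R); have [it ii] := idm_ti R; split=> //.
  by rewrite mcomp_idr mcomp_idl; reflexivity.
move=> W; exists 0, L, R, (idm L), (rr rho), (idm L), (idm R); split; split=> //.
- exact: inst0.
- exact: idm_ti.
- by rewrite mcomp_idr mcomp_idl; reflexivity.
- by move=> w /negP []; apply/inimVP; exists w.
- by move=> w /negP []; apply/inimEP; exists w.
- by move=> w /negP []; apply/inimVP; exists w.
- by move=> w /negP []; apply/inimEP; exists w.
Qed.

Lemma good_step n (Lb Rb : gr) (pi : morph L Lb) (ga : morph Lb Rb) :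
  inst n pi ga -> Good pi ga ->
  forall u : branch L, List.In u (rU rho) ->
  forall (Lbu : gr) (p' : morph Lb Lbu) (pi' : morph (Lu u) Lbu),
  is_pushout pi (pu u) p' pi' ->
  forall (Rbu : gr) (al : morph Rb Rbu) (be : morph (Ru u) Rbu),
  is_pushout (mcomp ga pi) (mcomp (qu u) (pu u)) al be ->
  forall eta : morph Lbu Rbu,
  meq (mcomp eta p') (mcomp al ga) -> meq (mcomp eta pi') (mcomp be (qu u)) ->
  Good (mcomp p' pi) eta.
Proof.
move=> I IH u Hu Lbu p' pi' Hpo1 Rbu al be Hpo2 eta He1 He2.
have [pt pti] := inst_pi I.
have ut := pu_total u; have ui := pu_inj u; have qt := qp_total u; have qi := qp_inj u.
have [p't p'i] := C1 ut ui Hpo1.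
have [alt ali] := C1 qt qi Hpo2.
have [rh [rht rhi Hrh IHW]] := IH.
exists (mcomp al rh); split.
- exact: comp_total.
- exact: comp_inj.
- rewrite (mcompA pi p' eta) He1 -(mcompA pi ga al) Hrh (mcompA (rr rho) rh al).
  reflexivity.
move=> W.
pose W' := fun w0 => oapp W false (mV al w0).
have [k [Lb1 [Rb1 [pi1 [ga1 [eL [eR [[I1 [eLt eLi] [eRt eRi] HeL HeR] [Hk I1V I1E I3V I3E]]]]]]]]] := IHW W'.
have He1V : forall x0 x, mV p' x0 = Some x -> mV eta x = obind (mV al) (mV ga x0).
  by move=> x0 x Hx; have := meqV He1 x0; rewrite /= Hx /= => ->.
have He1E : forall x0 x, mE p' x0 = Some x -> mE eta x = obind (mE al) (mE ga x0).
  by move=> x0 x Hx; have := meqE He1 x0; rewrite /= Hx /= => ->.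
have He2V : forall x0 x, mV pi' x0 = Some x -> mV eta x = obind (mV be) (mV (qu u) x0).
  by move=> x0 x Hx; have := meqV He2 x0; rewrite /= Hx /= => ->.
have He2E : forall x0 x, mE pi' x0 = Some x -> mE eta x = obind (mE be) (mE (qu u) x0).
  by move=> x0 x Hx; have := meqE He2 x0; rewrite /= Hx /= => ->.
have Hgp : meq (mcomp ga pi) (mcomp eR (mcomp ga1 pi1)).
  rewrite -HeL (mcompA pi1 eL ga) HeR -(mcompA pi1 ga1 eR); reflexivity.
have HgpV : forall x, mV (mcomp ga pi) x = obind (mV eR) (mV (mcomp ga1 pi1) x).
  exact: meqV Hgp.
have trV : forall w0 w, ~~ W' w0 -> mV al w0 = Some w -> ~~ W w.
  by move=> w0 w; rewrite /W' => H E; move: H; rewrite E.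
have trE : forall e0 e, has (fun v => ~~ W' v) (conn e0) -> mE al e0 = Some e ->
    has (fun v => ~~ W v) (conn e).
  move=> e0 e /hasP [v Hv Hnv] E; have [w Hw] := tV alt v.
  apply/hasP; exists w; [exact: morph_conn_in E Hv Hw | exact: trV Hnv Hw].
have shV : forall x0 x, ~~ inimV eL x0 -> mV p' x0 = Some x ->
    oapp (fun w => ~~ W w) true (mV eta x).
  move=> x0 x H Hx; rewrite (He1V _ _ Hx); have := I3V x0 H.
  case: (mV ga x0) => //= w0 Hw0; have [w Hw] := tV alt w0; rewrite Hw /=; exact: trV Hw0 Hw.
have shE : forall x0 x, ~~ inimE eL x0 -> mE p' x0 = Some x ->
    oapp (fun e => has (fun v => ~~ W v) (conn e)) true (mE eta x).
  move=> x0 x H Hx; rewrite (He1E _ _ Hx); have := I3E x0 H.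
  case: (mE ga x0) => //= w0 Hw0; have [w Hw] := tE alt w0; rewrite Hw /=; exact: trE Hw0 Hw.
have notrh : forall w0 w, ~~ inimV rh w0 -> mV al w0 = Some w -> ~~ inimV (mcomp al rh) w.
  move=> w0 w H Hw; apply/negP => /inimVP [x /=]; case Ex: (mV rh x) => [w1|] //= Hw1.
  have E := ali.1 _ _ _ Hw1 Hw; subst w1.
  by move/negP: H; apply; apply/inimVP; exists x.
have HS : forall x, x \in [set w | W' w && ~~ inimV rh w] ->
    exists2 y, mV al x = Some y & y \in [set w | W w && ~~ inimV (mcomp al rh) w].
  move=> x; rewrite inE => /andP [HW Hn]; have [w Hw] := tV alt x; exists w => //.
  by rewrite inE; apply/andP; split; [move: HW; rewrite /W' Hw | exact: notrh Hn Hw].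
case keepb: [exists w, ~~ inimV al w && W w].
{
  move/existsP: (keepb) => [ws /andP [Hws1 Hws2]].
  have [pi1t pi1i] := inst_pi I1.
  have [Lb2 [p2 [pi2 Hpo3]]] := PO_ex pi1 ut ui.
  have [Rb2 [al2 [be2 Hpo4]]] := PO_ex (mcomp ga1 pi1) qt qi.
  have [p2t p2i] := C1 ut ui Hpo3.
  have [al2t al2i] := C1 qt qi Hpo4.
  have [eta2 [Heta1 Heta2]] : exists eta2, meq (mcomp eta2 p2) (mcomp al2 ga1) /\
      meq (mcomp eta2 pi2) (mcomp be2 (qu u)).
    apply: (po_ex Hpo3).
    rewrite -(mcompA pi1 ga1 al2) (proj1 Hpo4) (mcompA (pu u) (qu u) be2); reflexivity.
  have I2 : inst k.+1 (mcomp p2 pi1) eta2 := instS I1 Hu Hpo3 Hpo4 Heta1 Heta2.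
  have [eL2 [HeL2a HeL2b]] : exists eL2, meq (mcomp eL2 p2) (mcomp p' eL) /\
      meq (mcomp eL2 pi2) pi'.
    apply: (po_ex Hpo3).
    rewrite -(mcompA pi1 eL p') HeL (proj1 Hpo1); reflexivity.
  have [eR2 [HeR2a HeR2b]] : exists eR2, meq (mcomp eR2 al2) (mcomp al eR) /\
      meq (mcomp eR2 be2) be.
    apply: (po_ex Hpo4).
    rewrite -(mcompA (mcomp ga1 pi1) eR al) -Hgp (proj1 Hpo2); reflexivity.
  have eL2p2V : forall z x, mV p2 z = Some x -> mV eL2 x = obind (mV p') (mV eL z).
    by move=> z x Hx; have := meqV HeL2a z; rewrite /= Hx /= => ->.
  have eL2p2E : forall z x, mE p2 z = Some x -> mE eL2 x = obind (mE p') (mE eL z).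
    by move=> z x Hx; have := meqE HeL2a z; rewrite /= Hx /= => ->.
  have eL2pi2V : forall z x, mV pi2 z = Some x -> mV eL2 x = mV pi' z.
    by move=> z x Hx; have := meqV HeL2b z; rewrite /= Hx /= => ->.
  have eL2pi2E : forall z x, mE pi2 z = Some x -> mE eL2 x = mE pi' z.
    by move=> z x Hx; have := meqE HeL2b z; rewrite /= Hx /= => ->.
  have eR2al2V : forall z x, mV al2 z = Some x -> mV eR2 x = obind (mV al) (mV eR z).
    by move=> z x Hx; have := meqV HeR2a z; rewrite /= Hx /= => ->.
  have eR2al2E : forall z x, mE al2 z = Some x -> mE eR2 x = obind (mE al) (mE eR z).
    by move=> z x Hx; have := meqE HeR2a z; rewrite /= Hx /= => ->.
  have eR2be2V : forall z x, mV be2 z = Some x -> mV eR2 x = mV be z.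
    by move=> z x Hx; have := meqV HeR2b z; rewrite /= Hx /= => ->.
  have eR2be2E : forall z x, mE be2 z = Some x -> mE eR2 x = mE be z.
    by move=> z x Hx; have := meqE HeR2b z; rewrite /= Hx /= => ->.
  have [pi'V pi'E] := po_d_total ut ui Hpo1 pt.
  have [pi2V pi2E] := po_d_total ut ui Hpo3 pi1t.
  have [eL2t eL2i] : totalm eL2 /\ injm eL2.
    apply: (po_mono ut ui Hpo3 HeL2a HeL2b).
    - exact: comp_total.
    - exact: comp_inj.
    - by move=> y _; apply: pi'V.
    - by move=> e He _; apply: pi'E.
    - exact: C3V ut ui Hpo1.
    - exact: C3E ut ui Hpo1.
    - move=> y z w Hy Hw /=; case: (mV eL z) => //= z' E; exact: (C4V ut ui Hpo1 Hy Hw E).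
    - move=> y z w Hy Hw /=; case: (mE eL z) => //= z' E; exact: (C4E ut ui Hpo1 Hy Hw E).
  have [eR2t eR2i] : totalm eR2 /\ injm eR2.
    apply: (po_mono qt qi Hpo4 HeR2a HeR2b).
    - exact: comp_total.
    - exact: comp_inj.
    - by move=> y Hy E; apply: (C2V qt qi Hpo2 Hy E).
    - move=> e He Hd2; apply: (C2E' qt qi Hpo2 He) => v Hv.
      case Hvi: (inimV (mcomp (qu u) (pu u)) v); last exact: (C2V qt qi Hpo2 (negbT Hvi)).
      case/inimVP: Hvi => x Hx.
      case Ed2: (mE be2 e) => [t|]; last by [].
      have := morph_conn_def Ed2 Hv.
      rewrite (CcommV (proj1 Hpo4) Hx) (CcommV (proj1 Hpo2) Hx) HgpV.
      case: (mV (mcomp ga1 pi1) x) => [t1|] //= _.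
      have [t2 Ht2] := tV eRt t1; have [t3 Ht3] := tV alt t2; by rewrite Ht2 /= Ht3.
    - exact: C3V qt qi Hpo2.
    - exact: C3E qt qi Hpo2.
    - move=> y z w Hy Hw /=; case: (mV eR z) => //= z' E; exact: (C4V qt qi Hpo2 Hy Hw E).
    - move=> y z w Hy Hw /=; case: (mE eR z) => //= z' E; exact: (C4E qt qi Hpo2 Hy Hw E).
  exists k.+1, Lb2, Rb2, (mcomp p2 pi1), eta2, eL2, eR2; split; split=> //.
  - rewrite (mcompA pi1 p2 eL2) HeL2a -(mcompA pi1 eL p') HeL; reflexivity.
  - apply: (po_uniq Hpo3).
    + rewrite -(mcompA p2 eL2 eta) HeL2a (mcompA eL p' eta) He1 -(mcompA eL ga al) HeR.
      rewrite -(mcompA p2 eta2 eR2) Heta1 (mcompA ga1 al2 eR2) HeR2a -(mcompA ga1 eR al).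
      reflexivity.
    + rewrite -(mcompA pi2 eL2 eta) HeL2b He2 -(mcompA pi2 eta2 eR2) Heta2.
      rewrite (mcompA (qu u) be2 eR2) HeR2b; reflexivity.
  - apply: leq_ltn_trans Hk _; apply: (card_pinj_lt (t := ws) ali.1 HS).
    + by rewrite inE Hws2 im_comp_notV.
    + by move=> x Hx; move/inimVP: Hws1; apply; exists x.
  - move=> w Hw; case: (C5V qt qi Hpo2 w) => [[w0 Hw0]|[y Hy Hby]].
    + have Hn : ~~ inimV eR w0.
        apply/negP => /inimVP [z Hz]; move/negP: Hw; apply; apply/inimVP.
        have [t Ht] := tV al2t z; exists t; by rewrite (eR2al2V _ _ Ht) Hz /= Hw0.
      exact: trV (I1V _ Hn) Hw0.
    + exfalso; case Ht: (mV be2 y) => [t|]; last by case: (C2V qt qi Hpo4 Hy).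
      by move/negP: Hw; apply; apply/inimVP; exists t; rewrite (eR2be2V _ _ Ht) Hby.
  - move=> w Hw; case: (C5E qt qi Hpo2 w) => [[w0 Hw0]|[y Hy Hby]].
    + have Hn : ~~ inimE eR w0.
        apply/negP => /inimEP [z Hz]; move/negP: Hw; apply; apply/inimEP.
        have [t Ht] := tE al2t z; exists t; by rewrite (eR2al2E _ _ Ht) Hz /= Hw0.
      exact: trE (I1E _ Hn) Hw0.
    + exfalso; case Ht: (mE be2 y) => [t|].
        by move/negP: Hw; apply; apply/inimEP; exists t; rewrite (eR2be2E _ _ Ht) Hby.
      have : ~~ all (fun v => isSome (mV be2 v)) (conn y).
        by apply/negP => Hall; apply: (C2E qt qi Hpo4 Hy Hall); rewrite Ht.
      case/allPn => v Hv Hnv.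
      case Hvi: (inimV (mcomp (qu u) (pu u)) v); last first.
        by move: Hnv; case E: (mV be2 v) => //; case: (C2V qt qi Hpo4 (negbT Hvi)).
      case/inimVP: Hvi => x Hx.
      have := morph_conn_def Hby Hv.
      rewrite (CcommV (proj1 Hpo2) Hx) HgpV.
      move: Hnv; rewrite (CcommV (proj1 Hpo4) Hx).
      case: (mV (mcomp ga1 pi1) x) => [t1|] /=.
        by have [s ->] := tV al2t t1.
      by move=> _ H; apply: H.
  - move=> x Hx; case: (C5V ut ui Hpo1 x) => [[x0 Hx0]|[y Hy Hpy]].
    + have Hn : ~~ inimV eL x0.
        apply/negP => /inimVP [z Hz]; move/negP: Hx; apply; apply/inimVP.
        have [t Ht] := tV p2t z; exists t; by rewrite (eL2p2V _ _ Ht) Hz /= Hx0.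
      exact: shV Hn Hx0.
    + exfalso; case Ht: (mV pi2 y) => [t|]; last by case: (pi2V y).
      by move/negP: Hx; apply; apply/inimVP; exists t; rewrite (eL2pi2V _ _ Ht) Hpy.
  - move=> x Hx; case: (C5E ut ui Hpo1 x) => [[x0 Hx0]|[y Hy Hpy]].
    + have Hn : ~~ inimE eL x0.
        apply/negP => /inimEP [z Hz]; move/negP: Hx; apply; apply/inimEP.
        have [t Ht] := tE p2t z; exists t; by rewrite (eL2p2E _ _ Ht) Hz /= Hx0.
      exact: shE Hn Hx0.
    + exfalso; case Ht: (mE pi2 y) => [t|]; last by case: (pi2E y Hy).
      by move/negP: Hx; apply; apply/inimEP; exists t; rewrite (eL2pi2E _ _ Ht) Hpy.
}
have dropV : forall w, ~~ inimV al w -> ~~ W w.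
  move=> w Hw; apply/negP => HW; move/negP: (negbT keepb); apply; apply/existsP.
  by exists w; rewrite Hw HW.
have dropE : forall e, ~~ inimE al e -> has (fun v => ~~ W v) (conn e).
  move=> e He; have [v Hv Hvn] := new_edge Hrho Hu Hrh Hpo2 He.
  by apply/hasP; exists v => //; apply: dropV.
exists k, Lb1, Rb1, pi1, ga1, (mcomp p' eL), (mcomp al eR); split; split=> //.
- by split; [apply: comp_total | apply: comp_inj].
- by split; [apply: comp_total | apply: comp_inj].
- rewrite -(mcompA pi1 eL p') HeL; reflexivity.
- rewrite (mcompA eL p' eta) He1 -(mcompA eL ga al) HeR (mcompA ga1 eR al); reflexivity.
- exact: leq_trans Hk (card_pinj ali.1 HS).
- move=> w Hw; case Hwi: (inimV al w); last exact: dropV (negbT Hwi).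
  case/inimVP: Hwi => w0 Hw0.
  have Hn : ~~ inimV eR w0.
    apply/negP => /inimVP [z Hz]; move/negP: Hw; apply; apply/inimVP.
    by exists z; rewrite /= Hz /= Hw0.
  exact: trV (I1V _ Hn) Hw0.
- move=> w Hw; case Hwi: (inimE al w); last exact: dropE (negbT Hwi).
  case/inimEP: Hwi => w0 Hw0.
  have Hn : ~~ inimE eR w0.
    apply/negP => /inimEP [z Hz]; move/negP: Hw; apply; apply/inimEP.
    by exists z; rewrite /= Hz /= Hw0.
  exact: trE (I1E _ Hn) Hw0.
- move=> x Hx; case: (C5V ut ui Hpo1 x) => [[x0 Hx0]|[y Hy Hpy]].
  + have Hn : ~~ inimV eL x0.
      apply/negP => /inimVP [z Hz]; move/negP: Hx; apply; apply/inimVP.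
      by exists z; rewrite /= Hz /= Hx0.
    exact: shV Hn Hx0.
  + rewrite (He2V _ _ Hpy); case Eq: (mV (qu u) y) => [z|] //=.
    have Hz := qu_newV Hy Eq.
    case Eb: (mV be z) => [w|] //=; apply: dropV.
    by apply/negP => /inimVP [w0 Hw0]; apply: (C4V qt qi Hpo2 Hz Eb Hw0).
- move=> x Hx; case: (C5E ut ui Hpo1 x) => [[x0 Hx0]|[y Hy Hpy]].
  + have Hn : ~~ inimE eL x0.
      apply/negP => /inimEP [z Hz]; move/negP: Hx; apply; apply/inimEP.
      by exists z; rewrite /= Hz /= Hx0.
    exact: shE Hn Hx0.
  + rewrite (He2E _ _ Hpy); case Eq: (mE (qu u) y) => [z|] //=.
    have Hz := qu_newE Hy Eq.
    case Eb: (mE be z) => [w|] //=; apply: dropE.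
    by apply/negP => /inimEP [w0 Hw0]; apply: (C4E qt qi Hpo2 Hz Eb Hw0).
Qed.

Lemma main_ind n (Lb Rb : gr) (pi : morph L Lb) (ga : morph Lb Rb) :
  inst n pi ga -> Good pi ga.
Proof.
elim=> [|{}n {}Lb {}Rb {}pi {}ga I IH u Hu Lbu p' pi' Hpo1 Rbu al be Hpo2 eta He1 He2].
  exact: good0.
exact: good_step I IH u Hu Lbu p' pi' Hpo1 Rbu al be Hpo2 eta He1 He2.
Qed.

End Main.


Lemma insub_val (T : Type) (P : pred T) (sT : subType P) (x : T) (z : sT) :
  insub x = Some z -> val z = x.
Proof. by case: insubP => // y _ <- [->]. Qed.

Section Bij.
Variable Lab : finType.
Variable ar : Lab -> nat.
Local Notation gr := (graph ar).
Variables (X Y : gr) (u : morph X Y).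
Hypotheses (ut : totalm u) (ui : injm u) (us : surjm u).

Definition vV (y : gV Y) : option (gV X) := [pick x | mV u x == Some y].
Definition vE (y : gE Y) : option (gE X) := [pick x | mE u x == Some y].

Lemma vV_u x y : mV u x = Some y -> vV y = Some x.
Proof.
move=> H; rewrite /vV; case: pickP => [x' /eqP Hx'|Hn].
  by rewrite (ui.1 _ _ _ Hx' H).
by move: (Hn x); rewrite H eqxx.
Qed.
Lemma vE_u x y : mE u x = Some y -> vE y = Some x.
Proof.
move=> H; rewrite /vE; case: pickP => [x' /eqP Hx'|Hn].
  by rewrite (ui.2 _ _ _ Hx' H).
by move: (Hn x); rewrite H eqxx.
Qed.

Lemma v_morph : is_morph vV vE.
Proof.
move=> e x; rewrite /vE; case: pickP => [x' /eqP Hx'|//] [<-].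
have [l c1] := mP Hx'; split=> //.
rewrite (map_obind vV c1); apply: eq_map => v.
by have [y Hy] := tV ut v; rewrite Hy /= (vV_u Hy).
Qed.
Definition vm : morph Y X := Morph v_morph.

Lemma bij_inv : meq (mcomp vm u) (idm X) /\ meq (mcomp u vm) (idm Y).
Proof.
split; split=> y /=.
- by have [z Hz] := tV ut y; rewrite Hz /= (vV_u Hz).
- by have [z Hz] := tE ut y; rewrite Hz /= (vE_u Hz).
- by have [z Hz] := us.1 y; rewrite (vV_u Hz) /= Hz.
- by have [z Hz] := us.2 y; rewrite (vE_u Hz) /= Hz.
Qed.
End Bij.

Section Restr.
Variable Lab : finType.
Variable ar : Lab -> nat.
Local Notation gr := (graph ar).
Variables (Lb1 Lb H : gr) (eL : morph Lb1 Lb) (c : morph Lb H).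

Definition remV (x : gV H) : bool := [exists z, (mV c z == Some x) && ~~ inimV eL z].
Definition remE (e : gE H) : bool := [exists z, (mE c z == Some e) && ~~ inimE eL z].
Definition keepV (x : gV H) : bool := ~~ remV x.
Definition keepE (e : gE H) : bool := ~~ remE e && all keepV (conn e).
Definition KV := {x : gV H | keepV x}.
Definition KE := {e : gE H | keepE e}.
Definition Kconn (e : KE) : seq KV := pmap insub (conn (val e)).
Definition Klab (e : KE) : Lab := lab (val e).
Lemma Kconn_ar e : size (Kconn e) = ar (Klab e).
Proof.
rewrite /Kconn /Klab size_pmap -conn_ar; case: e => e /= /andP [_ Hall].
rewrite (eq_count (isSome_insub _)); by apply/eqP; rewrite -all_count.
Qed.
Definition Hg : gr := @Graph _ ar KV KE Kconn Klab Kconn_ar.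

Lemma iota_morph : is_morph (G := Hg) (H := H) (fun x => Some (val x)) (fun e => Some (val e)).
Proof.
move=> [e He] e' [<-]; split=> //=.
rewrite /Kconn (map_comp Some val) (pmap_filter (insubK _)).
have /andP [_ Hall] := He.
by congr map; apply/all_filterP; rewrite (eq_all (isSome_insub _)).
Qed.
Definition iota : morph Hg H := Morph iota_morph.

Lemma iinv_morph : is_morph (G := H) (H := Hg) (fun x => insub x) (fun e => insub e).
Proof.
move=> e e'; case: insubP => // [[e1 He1]] _ /= E [<-]; subst e1; split=> //=.
rewrite /Kconn /= pmap_all //.
by have /andP [_ Hall] := He1; rewrite (eq_all (isSome_insub _)).
Qed.
Definition iinv : morph H Hg := Morph iinv_morph.

Lemma iinv_sub : subgraph_morph iinv.
Proof.
split; split.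
- by move=> x y z /= Hx Hy; rewrite -(insub_val Hx) -(insub_val Hy).
- by move=> x y z /= Hx Hy; rewrite -(insub_val Hx) -(insub_val Hy).
- by move=> z; exists (val z); rewrite /= valK.
- by move=> z; exists (val z); rewrite /= valK.
Qed.
End Restr.


Theorem lemma4 (Lab : finType) (ar : Lab -> nat) (rho : rule ar)
  (Hrho : new_edges_attached rho) (G : graph ar) :
  forall (n : nat) (Lb Rb : graph ar) (pi : morph (rL rho) Lb) (ga : morph Lb Rb),
    inst n pi ga -> #|gV G| < n ->
  forall (R' : graph ar) (nu : morph Rb R') (m : morph R' G),
    subgraph_morph nu -> totalm m -> injm m ->
  forall (H : graph ar) (c : morph Lb H) (d : morph H G),
    totalm c -> injm c -> is_pushout (mcomp nu ga) c m d ->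
  exists (n' : nat) (Lb' Rb' : graph ar) (pi' : morph (rL rho) Lb')
         (ga' : morph Lb' Rb'),
    [/\ inst n' pi' ga', n' <= #|gV G| &
    exists nu' : morph Rb' R', subgraph_morph nu' /\
    exists (H' : graph ar) (c' : morph Lb' H') (d' : morph H' G),
      [/\ totalm c', injm c', is_pushout (mcomp nu' ga') c' m d' & subgraph H' H]].
Proof.
move=> n Lb Rb pi ga I _ R' nu m [nui [nus1 nus2]] mt mi H c d ct ci Hpo.
have [rh [_ _ _ HW]] := main_ind Hrho I.
pose W := fun w : gV Rb => isSome (mV nu w).
have [k [Lb1 [Rb1 [pi1 [ga1 [eL [eR [[I1 [eLt eLi] [eRt eRi] HeL HeR] [Hk I1V I1E I3V I3E]]]]]]]]] := HW W.
exists k, Lb1, Rb1, pi1, ga1; split=> //.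
  apply: leq_trans Hk _.
  apply: (@leq_trans #|[set w | W w]|).
    by apply: subset_leq_card; apply/subsetP => w; rewrite !inE => /andP [].
  apply: (@leq_trans #|[set: gV R']|).
    apply: (card_pinj nui.1) => w; rewrite inE /W; case E: (mV nu w) => [y|] // _.
    by exists y => //; rewrite inE.
  have := card_pinj (S := [set: gV R']) (T := [set: gV G]) mi.1; rewrite !cardsT; apply.
  by move=> w _; have [y Hy] := tV mt w; exists y => //; rewrite inE.
exists (mcomp nu eR); split.
  split; first exact: comp_inj eRi nui.
  split.
  - move=> z; have [w Hw] := nus1 z; case Hwi: (inimV eR w).
      by case/inimVP: Hwi => x Hx; exists x; rewrite /= Hx.
    by have := I1V w (negbT Hwi); rewrite /W Hw.
  - move=> z; have [w Hw] := nus2 z; case Hwi: (inimE eR w).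
      by case/inimEP: Hwi => x Hx; exists x; rewrite /= Hx.
    have := I1E w (negbT Hwi); case/hasP => v Hv; rewrite /W.
    by have := morph_conn_def Hw Hv; case: (mV nu v).
pose c' := mcomp (iinv eL c) (mcomp c eL).
pose d' := mcomp d (iota eL c).
exists (Hg eL c), c', d'.
have keepVc : forall z1 z x, mV eL z1 = Some z -> mV c z = Some x -> keepV eL c x.
  move=> z1 z x Hz Hx; rewrite /keepV /remV; apply/existsP => -[z2 /andP [/eqP Hz2 Hn]].
  have E := ci.1 _ _ _ Hz2 Hx; subst z2.
  by move/inimVP: Hn; apply; exists z1.
have keepEc : forall z1 z x, mE eL z1 = Some z -> mE c z = Some x -> keepE eL c x.
  move=> z1 z x Hz Hx; rewrite /keepE /remE; apply/andP; split.
    apply/existsP => -[z2 /andP [/eqP Hz2 Hn]].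
    have E := ci.2 _ _ _ Hz2 Hx; subst z2.
    by move/inimEP: Hn; apply; exists z1.
  apply/allP => v Hv.
  have [v0 Hv0 Hcv0] := morph_conn_in2 Hx Hv.
  have [v1 Hv1 Hv1e] := morph_conn_in2 Hz Hv0.
  exact: keepVc Hv1e Hcv0.
have c't : totalm c'.
  split=> z1.
    have [z Hz] := tV eLt z1; have [x Hx] := tV ct z.
    rewrite /= Hz /= Hx /=; case: insubP => // Hnk.
    by rewrite (keepVc _ _ _ Hz Hx) in Hnk.
  have [z Hz] := tE eLt z1; have [x Hx] := tE ct z.
  rewrite /= Hz /= Hx /=; case: insubP => // Hnk.
  by rewrite (keepEc _ _ _ Hz Hx) in Hnk.
have c'i : injm c'.
  apply: comp_inj; first exact: comp_inj.
  by have [] := iinv_sub eL c.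
have c'valV : forall z1 y, mV c' z1 = Some y -> mV (mcomp c eL) z1 = Some (val y).
  move=> z1 y /=; case: (mV eL z1) => //= z; case: (mV c z) => //= x.
  by move=> E; rewrite -(insub_val E).
have c'valE : forall z1 y, mE c' z1 = Some y -> mE (mcomp c eL) z1 = Some (val y).
  move=> z1 y /=; case: (mE eL z1) => //= z; case: (mE c z) => //= x.
  by move=> E; rewrite -(insub_val E).
have notimcV : forall y, ~~ inimV c' y -> ~~ inimV c (val y).
  move=> y Hy; apply/negP => /inimVP [z Hz].
  case Hzi: (inimV eL z).
    case/inimVP: Hzi => z1 Hz1; move/negP: Hy; apply; apply/inimVP; exists z1.
    by rewrite /= Hz1 /= Hz /= valK.
  have := valP y; rewrite /keepV /remV => /negP; apply; apply/existsP; exists z.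
  by rewrite Hz eqxx Hzi.
have notimcE : forall y, ~~ inimE c' y -> ~~ inimE c (val y).
  move=> y Hy; apply/negP => /inimEP [z Hz].
  case Hzi: (inimE eL z).
    case/inimEP: Hzi => z1 Hz1; move/negP: Hy; apply; apply/inimEP; exists z1.
    by rewrite /= Hz1 /= Hz /= valK.
  have /andP [+ _] := valP y; rewrite /remE => /negP; apply; apply/existsP; exists z.
  by rewrite Hz eqxx Hzi.
have Hioc : meq (mcomp (iota eL c) c') (mcomp c eL).
  split=> z /=.
    case Ez: (mV eL z) => [z0|] //=; case Ex: (mV c z0) => [x|] //=.
    case: insubP => [y _ E|Hnk]; first by rewrite -E.
    by rewrite (keepVc _ _ _ Ez Ex) in Hnk.
  case Ez: (mE eL z) => [z0|] //=; case Ex: (mE c z0) => [x|] //=.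
  case: insubP => [y _ E|Hnk]; first by rewrite -E.
  by rewrite (keepEc _ _ _ Ez Ex) in Hnk.
have Hcomm : meq (mcomp m (mcomp (mcomp nu eR) ga1)) (mcomp d' c').
  rewrite -(mcompA ga1 eR nu) -HeR (mcompA eL ga nu) (mcompA eL (mcomp nu ga) m) (proj1 Hpo).
  rewrite -(mcompA eL c d) -(mcompA c' (iota eL c) d) Hioc; reflexivity.
have [P [bp [dp Hp]]] := PO_ex (mcomp (mcomp nu eR) ga1) c't c'i.
have [uu [Hub Hud]] := po_ex Hp Hcomm.
have helpV : forall z y, mV c' z = Some y ->
    (mV d (val y) <> None <-> mV (mcomp (mcomp nu eR) ga1) z <> None).
  move=> z y Hz; have := c'valV _ _ Hz => /=.
  case Ez: (mV eL z) => [z0|] //= Hc.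
  rewrite (CcommV (proj1 Hpo) Hc) /=.
  have := meqV HeR z; rewrite /= Ez /= => ->.
  case: (mV ga1 z) => [t|] //=; case: (mV eR t) => [t'|] //=.
  case: (mV nu t') => [t''|] //=; have [s ->] := tV mt t''; done.
have HcpV : forall z y, mV c' z = Some y -> mV dp y = obind (mV bp) (mV (mcomp (mcomp nu eR) ga1) z).
  by move=> z y Hz; rewrite (CcommV (proj1 Hp) Hz).
have [bpt _] := C1 c't c'i Hp.
have [uut uui] : totalm uu /\ injm uu.
  apply: (po_mono c't c'i Hp Hub Hud mt mi).
  - by move=> y Hy /=; apply: (C2V ct ci Hpo (notimcV _ Hy)).
  - move=> e Hy Hdp /=; apply: (C2E' ct ci Hpo (notimcE _ Hy)) => v Hv.
    have Hkv : keepV eL c v by have /andP [_ /allP] := valP e; apply.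
    pose y : KV eL c := Sub v Hkv.
    have Hy' : y \in conn e by rewrite /= /Kconn mem_pmap_sub.
    case Edp: (mE dp e) => [t|]; last by [].
    have Hdy := morph_conn_def Edp Hy'.
    case Hyi: (inimV c' y); last exact: (C2V ct ci Hpo (notimcV _ (negbT Hyi))).
    case/inimVP: Hyi => z Hz.
    apply: (proj2 (helpV z y Hz)).
    by move: Hdy; rewrite (HcpV _ _ Hz); case: (mV (mcomp (mcomp nu eR) ga1) z).
  - by move=> y1 y2 t H1 H2 /= E1 E2; apply: val_inj; apply: (C3V ct ci Hpo (notimcV _ H1) (notimcV _ H2) E1 E2).
  - by move=> y1 y2 t H1 H2 /= E1 E2; apply: val_inj; apply: (C3E ct ci Hpo (notimcE _ H1) (notimcE _ H2) E1 E2).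
  - by move=> y z w Hy /= Hw E; apply: (C4V ct ci Hpo (notimcV _ Hy) Hw E).
  - by move=> y z w Hy /= Hw E; apply: (C4E ct ci Hpo (notimcE _ Hy) Hw E).
have uuV : forall y t, mV dp y = Some t -> mV uu t = mV d' y.
  by move=> y t Ht; rewrite -(meqV Hud y) /= Ht.
have uuE : forall y t, mE dp y = Some t -> mE uu t = mE d' y.
  by move=> y t Ht; rewrite -(meqE Hud y) /= Ht.
have uus : surjm uu.
  split=> g.
  - case: (C5V ct ci Hpo g) => [[r Hr]|[x Hx Hdx]].
      have [t Ht] := tV bpt r; exists t; by rewrite -Hr -(meqV Hub r) /= Ht.
    have Hkx : keepV eL c x.
      rewrite /keepV /remV; apply/existsP => -[z /andP [/eqP Hz _]].
      by move/inimVP: Hx; apply; exists z.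
    pose y : KV eL c := Sub x Hkx.
    have Hy : ~~ inimV c' y.
      apply/negP => /inimVP [z Hz]; move/inimVP: Hx; apply.
      have := c'valV _ _ Hz => /=; case: (mV eL z) => //= z0 Hz0; by exists z0.
    case Et: (mV dp y) => [t|]; last by case: (C2V c't c'i Hp Hy).
    by exists t; rewrite (uuV _ _ Et).
  - case: (C5E ct ci Hpo g) => [[r Hr]|[x Hx Hdx]].
      have [t Ht] := tE bpt r; exists t; by rewrite -Hr -(meqE Hub r) /= Ht.
    have Hkx : keepE eL c x.
      rewrite /keepE /remE; apply/andP; split.
        apply/existsP => -[z /andP [/eqP Hz _]].
        by move/inimEP: Hx; apply; exists z.
      apply/allP => v Hv; rewrite /keepV /remV; apply/existsP => -[z /andP [/eqP Hz Hzn]].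
      have := morph_conn_def Hdx Hv; rewrite (CcommV (proj1 Hpo) Hz) /=.
      have := I3V z Hzn; case: (mV ga z) => [w|] //= Hw.
      by move: Hw; rewrite /W; case: (mV nu w).
    pose y : KE eL c := Sub x Hkx.
    have Hy : ~~ inimE c' y.
      apply/negP => /inimEP [z Hz]; move/inimEP: Hx; apply.
      have := c'valE _ _ Hz => /=; case: (mE eL z) => //= z0 Hz0; by exists z0.
    case Et: (mE dp y) => [t|].
      by exists t; rewrite (uuE _ _ Et).
    exfalso; apply: (C2E' c't c'i Hp Hy) Et => v' Hv'.
    have Hv'x : val v' \in conn x by move: Hv'; rewrite /= /Kconn mem_pmap_sub.
    case Hyi: (inimV c' v'); last exact: (C2V c't c'i Hp (negbT Hyi)).
    case/inimVP: Hyi => z Hz.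
    rewrite (HcpV _ _ Hz).
    have := proj1 (helpV z v' Hz) (morph_conn_def Hdx Hv'x).
    case: (mV (mcomp (mcomp nu eR) ga1) z) => [t|] //= _.
    by have [s ->] := tV bpt t.
have [Hvu Huv] := bij_inv uut uui uus.
split=> //.
- exact: po_transfer Hp Hvu Huv Hub Hud.
- by exists (iinv eL c); apply: iinv_sub.
Qed.
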